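(* Denote $\left\|G_m\right\|_{\mathcal{H}_2}^2$ as $f(s_1,s_2)$. Then \begin{equation*} f(s_1,s_2)=2(s_1+s_2)\, C \mathcal{A}_2^{-1}\left(s_1s_2 \mathbf{B}+ A \mathbf{B} A^T\right) \mathcal{A}_2^{-T} C^T, \end{equation*} where $\mathcal{A}_2=\left(s_1 I-A\right)\left(s_2 I-A\right)$ and $\mathbf{B}=B B^T$.
   Context: Let $G(s)=C(sI-A)^{-1}B$ be a stable SISO continuous-time LTI system of order $n$, with $A\in\mathbb{R}^{n\times n}$, $B\in\mathbb{R}^{n\times 1}$, $C\in\mathbb{R}^{1\times n}$. Consider a stable reduced-order model $G_m(s)=C_m(sI_m-A_m)^{-1}B_m$ of order $m=2$ written in the diagonal form $A_m=\operatorname{diag}(a_1,a_2)$, $B_m=[b_1\ b_2]^T$, $C_m=[1\ 1]$, which satisfies the first-order necessary conditions for $\mathcal{H}_2$ optimality, i.e. with interpolation points $s_i=-a_i$ ($i=1,2$) it interpolates $G$ and $G'$ at $s_1,s_2$: $G_m(s_i)=G(s_i)$, $G_m'(s_i)=G'(s_i)$. The interpolation points are distinct ($s_1\neq s_2$), not eigenvalues of $A$, and either both real ($s_1,s_2\in\mathbb{R}$) or a complex conjugate pair ($s_2=\bar s_1$). Define $g_i=C(s_iI-A)^{-1}B$, $i=1,2$, so that $G_m(s_i)=g_i$. The $\mathcal{H}_2$ norm is $\|G_m\|_{\mathcal{H}_2}^2=C_mP_mC_m^H$, where $P_m$ is the controllability Gramian solving $A_mP_m+P_mA_m^H+B_mB_m^H=0$.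 *)

(* Defs.v *)
From HB Require Import structures.
From mathcomp Require Import all_boot all_order all_algebra.
From mathcomp Require Import all_classical all_reals all_analysis.
From mathcomp Require Import complex.
Set Implicit Arguments. Unset Strict Implicit. Unset Printing Implicit Defensive.
Import Order.TTheory GRing.Theory Num.Theory.
Import numFieldNormedType.Exports.
Local Open Scope ring_scope.

Definition cmx (R : realType) (m n : nat) (M : 'M[R]_(m, n)) : 'M[R[i]]_(m, n) :=
  map_mx (real_complex R) M.

Definition ctrmx (R : realType) (m n : nat) (M : 'M[R[i]]_(m, n)) : 'M[R[i]]_(n, m) :=
  (map_mx Num.conj M)^T.

Definition tf (R : realType) (n : nat) (A : 'M[R[i]]_n) (B : 'cV[R[i]]_n)
  (C : 'rV[R[i]]_n) (s : R[i]) : R[i] :=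
  (C *m invmx (s%:M - A) *m B) 0 0.

Definition hurwitz (R : realType) (n : nat) (A : 'M[R[i]]_n) : Prop :=
  forall l : R[i], eigenvalue A l -> complex.Re l < 0.

(* Complex derivative f'(s) of f : C -> C (C viewed as a normed module over
   itself, with the modulus as norm); this is MathComp-Analysis' derive1. *)
Definition cderive (R : realType) (f : R[i] -> R[i]) : R[i] -> R[i] :=
  derive1 (V := (R[i])^o) f.

(* Main.v *)
Require Import Defs.
From HB Require Import structures.
From mathcomp Require Import all_boot all_order all_algebra.
From mathcomp Require Import all_classical all_reals all_analysis.
From mathcomp Require Import complex.
From mathcomp Require Import ring.
Import Order.TTheory GRing.Theory Num.Theory.
Import numFieldNormedType.Exports.
Local Open Scope ring_scope.

Lemma tf_diag2 (R : realType) (a1 a2 b1 b2 s : R[i]) :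
  s - a1 != 0 -> s - a2 != 0 ->
  tf (diag_mx (\row_(j<2) [:: a1; a2]`_j)) (\col_(j<2) [:: b1; b2]`_j) (const_mx 1) s
  = b1 / (s - a1) + b2 / (s - a2).
Proof.
move=> h1 h2; rewrite /tf.
set d := \row_(j<2) [:: s - a1; s - a2]`_j.
have eD : s%:M - diag_mx (\row_(j<2) [:: a1; a2]`_j) = diag_mx d.
  apply/matrixP => i j; rewrite !mxE.
  case: (i == j); rewrite ?mulr1n ?mulr0n ?subr0 //.
  by case: i => [[|[|]]] //=.
set e := \row_(j<2) [:: (s-a1)^-1; (s-a2)^-1]`_j.
have inv: invmx (diag_mx d) = diag_mx e.
  have U: diag_mx d *m diag_mx e = 1%:M.
    rewrite mulmx_diag -diag_const_mx; congr diag_mx; apply/rowP => j; rewrite !mxE.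
    by case: j => [[|[|]]] //= _; rewrite mulfV.
  have Du: diag_mx d \in unitmx by case/mulmx1_unit: U.
  by rewrite -[RHS]mul1mx -(mulVmx Du) -mulmxA U mulmx1.
rewrite eD inv !mxE !big_ord_recr !big_ord0 /= !mxE !big_ord_recr !big_ord0 /= !mxE /=.
rewrite !mulr1n !mulr0n; ring.
Qed.

Lemma eig_diag (F : fieldType) n (d : 'rV[F]_n) i : eigenvalue (diag_mx d) (d 0 i).
Proof.
apply/eigenvalueP; exists (delta_mx 0 i).
  rewrite mul_mx_diag; apply/matrixP => p q; rewrite !mxE.
  case: (eqVneq q i) => [->|ne]; rewrite ?eqxx ?andbT ?andbF /= ?mulr0n ?mul0r ?mulr0 //.
  by rewrite mulrC.
by apply/eqP => /matrixP /(_ 0 i); rewrite !mxE !eqxx /= => /eqP; rewrite oner_eq0.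
Qed.

Lemma unit_noneig (F : fieldType) n (A : 'M[F]_n) s :
  ~ eigenvalue A s -> s%:M - A \in unitmx.
Proof.
move=> h; have k : kermx (A - s%:M) == 0.
  by case: (boolP (kermx (A - s%:M) == 0)) => // k; exfalso; apply: h.
rewrite kermx_eq0 row_free_unit in k.
have -> : s%:M - A = (-1) *: (A - s%:M) by rewrite scaleN1r opprB.
by rewrite unitmxZ // unitrN1.
Qed.

Lemma cmx_conj (R : realType) m n (M : 'M[R]_(m, n)) :
  map_mx Num.conj (cmx M) = cmx M.
Proof.
apply/matrixP => i j; rewrite !mxE conj_Creal //.
by apply/complex_realP; exists (M i j).
Qed.

Lemma tf_conj (R : realType) n (A : 'M[R]_n) (B : 'cV[R]_n) (C : 'rV[R]_n) s :
  Num.conj (tf (cmx A) (cmx B) (cmx C) s) = tf (cmx A) (cmx B) (cmx C) (Num.conj s).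
Proof.
rewrite /tf.
have -> : forall M : 'M[R[i]]_1, Num.conj (M 0 0) = (map_mx Num.conj M) 0 0 by move=> M; rewrite mxE.
rewrite map_mxM map_mxM map_invmx map_mxB.
by rewrite map_scalar_mx !cmx_conj.
Qed.

Lemma ReD (R : realType) (x y : R[i]) : complex.Re (x + y) = complex.Re x + complex.Re y.
Proof. by case: x; case: y. Qed.
Lemma ReN (R : realType) (x : R[i]) : complex.Re (- x) = - complex.Re x.
Proof. by case: x. Qed.
Lemma ReJ (R : realType) (x : R[i]) : complex.Re (Num.conj x) = complex.Re x.
Proof. by apply: complexI; rewrite !complexRe Re_conj. Qed.
Lemma pos_nz (R : realType) (x y : R[i]) :
  0 < complex.Re x -> 0 < complex.Re y -> x + y != 0.
Proof.
move=> hx hy; apply/eqP => h; have := congr1 (@complex.Re R) h.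
by rewrite ReD /= => e; move: (addr_gt0 hx hy); rewrite e ltxx.
Qed.

Lemma uniq2 (F : fieldType) (x y u1 u2 v1 v2 : F) :
  x + x != 0 -> x + y != 0 -> y + x != 0 -> y + y != 0 -> x - y != 0 ->
  u1 / (x + x) + u2 / (x + y) = v1 / (x + x) + v2 / (x + y) ->
  u1 / (y + x) + u2 / (y + y) = v1 / (y + x) + v2 / (y + y) ->
  u1 = v1 /\ u2 = v2.
Proof.
move=> h1 h2 h3 h4 h5 e1 e2.
have k : (u2 - v2) * (x - y) ^+ 2 = - (y + y) * ((x + x) * (x + y) *
   ((u1 / (x + x) + u2 / (x + y)) - (v1 / (x + x) + v2 / (x + y)))
   - (x + y) ^+ 2 * ((u1 / (y + x) + u2 / (y + y)) - (v1 / (y + x) + v2 / (y + y)))).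
  by field; rewrite h4 h3 h1.
rewrite e1 e2 !subrr !mulr0 subrr mulr0 in k.
have /eqP : u2 - v2 = 0.
  by apply/eqP; move/eqP: k; rewrite mulf_eq0 expf_eq0 /= (negbTE h5) orbF.
rewrite subr_eq0 => /eqP e; subst u2; split => //.
move/addIr: e1 => e1; apply: (mulIf (invr_neq0 h1)); exact: e1.
Qed.


Lemma lyap_entry (R : realType) m (d : 'rV[R[i]]_m) (P : 'M[R[i]]_m) (b : 'cV[R[i]]_m) :
  diag_mx d *m P + P *m ctrmx (diag_mx d) + b *m ctrmx b = 0 ->
  forall i j, P i j * (d 0 i + Num.conj (d 0 j)) = - (b i 0 * Num.conj (b j 0)).
Proof.
move=> h i j; have := congr1 (fun M : 'M[R[i]]_m => M i j) h.
rewrite /ctrmx map_diag_mx tr_diag_mx mul_diag_mx mul_mx_diag !mxE big_ord1 !mxE.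
move=> e; apply/eqP; rewrite -subr_eq0 opprK -e; apply/eqP; ring.
Qed.

Lemma quad_entry (R : realType) (P : 'M[R[i]]_2) :
  ((const_mx 1 : 'rV[R[i]]_2) *m P *m ctrmx (const_mx 1 : 'rV[R[i]]_2)) 0 0 = P 0 0 + P 0 1 + P 1 0 + P 1 1.
Proof.
rewrite !mxE !big_ord_recr !big_ord0 /= !mxE !big_ord_recr !big_ord0 /= !mxE rmorph1.
have -> : widen_ord (leqnSn 1) ord_max = 0 :> 'I_2 by apply/val_inj.
have -> : ord_max = 1 :> 'I_2 by apply/val_inj.
ring.
Qed.


Lemma rhs_eq (F : fieldType) n (Ac : 'M[F]_n) (Bc : 'cV_n) (Cc : 'rV_n) s1 s2 :
  s1%:M - Ac \in unitmx -> s2%:M - Ac \in unitmx -> s1 - s2 != 0 ->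
  (Cc *m invmx ((s1%:M - Ac) *m (s2%:M - Ac)) *m
     (s1 * s2 *: (Bc *m Bc^T) + Ac *m (Bc *m Bc^T) *m Ac^T) *m
     (invmx ((s1%:M - Ac) *m (s2%:M - Ac)))^T *m Cc^T) 0 0
   = s1 * s2 * ((( (Cc *m invmx (s2%:M - Ac) *m Bc) 0 0 - (Cc *m invmx (s1%:M - Ac) *m Bc) 0 0)
                / (s1 - s2)) ^+ 2)
     + (s1 * (((Cc *m invmx (s2%:M - Ac) *m Bc) 0 0 - (Cc *m invmx (s1%:M - Ac) *m Bc) 0 0)
                / (s1 - s2)) - (Cc *m invmx (s2%:M - Ac) *m Bc) 0 0) ^+ 2.
Proof.
set M1 := s1%:M - Ac; set M2 := s2%:M - Ac => U1 U2 nd.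
set R1 := invmx M1; set R2 := invmx M2.
have UA : M1 *m M2 \in unitmx by rewrite unitmx_mul U1 U2.
have eX : invmx (M1 *m M2) = R2 *m R1.
  rewrite -[RHS]mulmx1 -(mulmxV UA) /R1 /R2 -!mulmxA.
  by rewrite (mulKmx U1) (mulKmx U2).
have key : (s1 - s2) *: (R2 *m R1) = R2 - R1.
  have eM : M1 - M2 = (s1 - s2)%:M.
    by rewrite /M1 /M2 opprB addrA subrK raddfB.
  by rewrite scalemxAr -mul_scalar_mx -eM mulmxBl mulmxV // mulmxBr mulmx1 mulmxA mulVmx // mul1mx.
have eA : R1 *m Ac = s1 *: R1 - 1%:M.
  have -> : Ac = s1%:M - M1 by rewrite /M1 subKr.
  by rewrite mulmxBr mulVmx // mul_mx_scalar.
set U := Cc *m (R2 *m R1) *m Bc.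
set V := Cc *m (R2 *m R1) *m Ac *m Bc.
have eU : U 0 0 = ((Cc *m R2 *m Bc) 0 0 - (Cc *m R1 *m Bc) 0 0) / (s1 - s2).
  have k : (s1 - s2) * U 0 0 = (Cc *m R2 *m Bc) 0 0 - (Cc *m R1 *m Bc) 0 0.
    have e0 : (s1 - s2) * U 0 0 = ((s1 - s2) *: U) 0 0.
      by rewrite [RHS]mxE.
    by rewrite e0 /U scalemxAl scalemxAr key mulmxBr mulmxBl !mxE.
  by rewrite -k [_ * U 0 0]mulrC mulfK.
have eV : V 0 0 = s1 * U 0 0 - (Cc *m R2 *m Bc) 0 0.
  rewrite /V -(mulmxA Cc) -(mulmxA R2) eA mulmxBr mulmxBr mulmxBl mxE mulmx1.
  by rewrite -!scalemxAr -scalemxAl -/U !mxE.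
have eM : Cc *m (R2 *m R1) *m (s1 * s2 *: (Bc *m Bc^T) + Ac *m (Bc *m Bc^T) *m Ac^T)
            *m (R2 *m R1)^T *m Cc^T = (s1 * s2) *: (U *m U^T) + V *m V^T.
  rewrite /U /V !trmx_mul mulmxDr !mulmxDl -!scalemxAr -!scalemxAl.
  by rewrite !mulmxA.
by rewrite eX eM -eU -eV !mxE !big_ord1 !mxE !expr2.

Qed.

Arguments pos_nz {R x y}.
Arguments uniq2 {F x y u1 u2 v1 v2}.
Arguments lyap_entry {R m d P b}.
Arguments rhs_eq {F n Ac Bc Cc s1 s2}.
Arguments unit_noneig {F n A s}.

Theorem lemma5 (R : realType) (n : nat)
  (A : 'M[R]_n) (B : 'cV[R]_n) (C : 'rV[R]_n)
  (a1 a2 b1 b2 s1 s2 : R[i]) :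
  let Ac := cmx A in let Bc := cmx B in let Cc := cmx C in
  let Am : 'M[R[i]]_2 := diag_mx (\row_(j < 2) [:: a1; a2]`_j) in
  let Bm : 'cV[R[i]]_2 := \col_(j < 2) [:: b1; b2]`_j in
  let Cm : 'rV[R[i]]_2 := const_mx 1 in
  let G := tf Ac Bc Cc in
  let Gm := tf Am Bm Cm in
  (* G stable, G_m stable *)
  hurwitz Ac -> hurwitz Am ->
  (* interpolation points *)
  s1 = - a1 -> s2 = - a2 ->
  s1 != s2 ->
  ~ eigenvalue Ac s1 -> ~ eigenvalue Ac s2 ->
  ((Num.conj s1 = s1 /\ Num.conj s2 = s2) \/ s2 = Num.conj s1) ->
  (* first-order H2-optimality (Hermite interpolation) conditions *)
  Gm s1 = G s1 -> Gm s2 = G s2 ->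
  cderive Gm s1 = cderive G s1 -> cderive Gm s2 = cderive G s2 ->
  (* ||G_m||_H2^2 = C_m P_m C_m^H, P_m the controllability Gramian *)
  forall Pm : 'M[R[i]]_2,
    Am *m Pm + Pm *m ctrmx Am + Bm *m ctrmx Bm = 0 ->
  let A2 := (s1%:M - Ac) *m (s2%:M - Ac) in
  let BB := Bc *m Bc^T in
  (Cm *m Pm *m ctrmx Cm) 0 0 =
    2 * (s1 + s2) *
    (Cc *m invmx A2 *m (s1 * s2 *: BB + Ac *m BB *m Ac^T) *m (invmx A2)^T *m Cc^T) 0 0.
Proof.
move=> Ac Bc Cc Am Bm Cm G Gm _ hAm e1 e2 s12 ne1 ne2 hc hG1 hG2 _ _ Pm hP A2 BB.
have ea1 : a1 = - s1 by rewrite e1 opprK.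
have ea2 : a2 = - s2 by rewrite e2 opprK.
have Rs1 : 0 < complex.Re s1.
  have := hAm _ (@eig_diag _ _ (\row_(j < 2) [:: a1; a2]`_j) 0); rewrite mxE /=.
  by rewrite e1 ReN oppr_gt0.
have Rs2 : 0 < complex.Re s2.
  have := hAm _ (@eig_diag _ _ (\row_(j < 2) [:: a1; a2]`_j) 1); rewrite mxE /=.
  by rewrite e2 ReN oppr_gt0.
have Rc1 : 0 < complex.Re (Num.conj s1) by rewrite ReJ.
have Rc2 : 0 < complex.Re (Num.conj s2) by rewrite ReJ.
have n11 := pos_nz Rs1 Rs1. have n12 := pos_nz Rs1 Rs2.
have n21 := pos_nz Rs2 Rs1. have n22 := pos_nz Rs2 Rs2.
have m11 := pos_nz Rs1 Rc1. have m12 := pos_nz Rs1 Rc2.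
have m21 := pos_nz Rs2 Rc1. have m22 := pos_nz Rs2 Rc2.
have ns1 : s1 != 0 by apply/eqP => h; move: Rs1; rewrite h ltxx.
have ns2 : s2 != 0 by apply/eqP => h; move: Rs2; rewrite h ltxx.
have nd : s1 - s2 != 0 by rewrite subr_eq0.
have GmE : forall s, s + s1 != 0 -> s + s2 != 0 -> Gm s = b1 / (s + s1) + b2 / (s + s2).
  by move=> s h1 h2; rewrite /Gm tf_diag2; rewrite ?ea1 ?ea2 !opprK.
have E1 : b1 / (s1 + s1) + b2 / (s1 + s2) = G s1 by rewrite -GmE.
have E2 : b1 / (s2 + s1) + b2 / (s2 + s2) = G s2 by rewrite -GmE.
have cG : forall s, Num.conj (G s) = G (Num.conj s) by move=> s; exact: tf_conj.
have hP' := lyap_entry hP.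
have p00 := hP' 0 0; have p01 := hP' 0 1; have p10 := hP' 1 0; have p11 := hP' 1 1.
rewrite !mxE /= in p00 p01 p10 p11.
have q : forall x y : R[i], x + y^* != 0 -> - x + (- y)^* != 0.
  by move=> x y h; rewrite rmorphN -opprD oppr_eq0.
have P00 : Pm 0 0 = - (b1 * b1^*) / (a1 + a1^*) by rewrite -p00 mulfK // ea1 q.
have P01 : Pm 0 1 = - (b1 * b2^*) / (a1 + a2^*) by rewrite -p01 mulfK // ea1 ea2 q.
have P10 : Pm 1 0 = - (b2 * b1^*) / (a2 + a1^*) by rewrite -p10 mulfK // ea1 ea2 q.
have P11 : Pm 1 1 = - (b2 * b2^*) / (a2 + a2^*) by rewrite -p11 mulfK // ea2 q.
have U1 := unit_noneig ne1; have U2 := unit_noneig ne2.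
rewrite /Cm quad_entry P00 P01 P10 P11 /A2 /BB rhs_eq //.
have -> : (Cc *m invmx (s1%:M - Ac) *m Bc) 0 0 = G s1 by [].
have -> : (Cc *m invmx (s2%:M - Ac) *m Bc) 0 0 = G s2 by [].
have cN : forall x y : R[i], - x + (- y)^* = - (x + y^*) by move=> x y; rewrite rmorphN opprD.
rewrite -E1 -E2 ea1 ea2 !cN.
case: hc => [[cs1 cs2]|hs].
  have cE1 : b1^* / (s1^* + s1^*) + b2^* / (s1^* + s2^*) = G s1^*.
    by rewrite -cG -E1 rmorphD !fmorph_div !rmorphD.
  have cE2 : b1^* / (s2^* + s1^*) + b2^* / (s2^* + s2^*) = G s2^*.
    by rewrite -cG -E2 rmorphD !fmorph_div !rmorphD.
  rewrite cs1 cs2 in cE1 cE2.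
  have [cb1 cb2] := uniq2 n11 n12 n21 n22 nd (etrans cE1 (esym E1)) (etrans cE2 (esym E2)).
  rewrite cs1 cs2 cb1 cb2.
  by field; rewrite n22 n21 nd n11.
have cs1 : s1^* = s2 by rewrite hs.
have cs2 : s2^* = s1 by rewrite hs conjCK.
have cE1 : b1^* / (s1^* + s1^*) + b2^* / (s1^* + s2^*) = G s1^*.
  by rewrite -cG -E1 rmorphD !fmorph_div !rmorphD.
have cE2 : b1^* / (s2^* + s1^*) + b2^* / (s2^* + s2^*) = G s2^*.
  by rewrite -cG -E2 rmorphD !fmorph_div !rmorphD.
rewrite cs1 cs2 addrC in cE1; rewrite cs1 cs2 addrC in cE2.
have [cb2 cb1] := uniq2 n11 n12 n21 n22 nd (etrans cE2 (esym E1)) (etrans cE1 (esym E2)).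
rewrite cs1 cs2 cb1 cb2.
by field; rewrite n22 n21 nd n11.
Qed.
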